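(* In the curved-exam game described in the context: (1) In any pure Nash equilibrium $x^*$, if $x_i^*=0$ then $x_j^*=0$ for every student $j$ with $\alpha_j<\alpha_i$; and if $x_i^*>0$ then $x_j^*>0$ for every student $j$ with $\alpha_j>\alpha_i$. (2) Let $0\le k\le n$ and let $x^{*(k)}$ be a $k$-don't care equilibrium. Then for each of the top $n-k$ students $i$, $$x_i^{*(k)}=\frac{(n-1)\alpha_i-n(1-\alpha_i)\big(m-\bar x^{*(k)}\big)}{n-\alpha_i},\qquad\text{where}\qquad \bar x^{*(k)}=\frac{(n-1)(m+1)S_2-(n-k)(m+1-1/n)}{(n-1)(S_2-1)+k},\quad S_2:=\sum_{i=k+1}^n\frac1{n-\alpha_{(i)}}.$$
   Context: The curved-exam game: fix $n\ge2$, abilities $\alpha_1,\dots,\alpha_n\in(0,1)$, target mean $m\in(0,1)$. Student $i$ chooses $x_i\in[0,1]$; $\bar x=\frac1n\sum_j x_j$, $\bar x_{-i}=\frac1{n-1}\sum_{j\ne i}x_j$. Grade $G_i(x)=x_i+\max(m-\bar x,0)$ (not truncated at 1); payoff $U_i(x)=G_i(x)^{\alpha_i}(1-x_i)^{1-\alpha_i}$. Let $\alpha_{(1)}\le\alpha_{(2)}\le\dots\le\alpha_{(n)}$ be the order statistics of the abilities (students relabelled accordingly). A $k$-don't care equilibrium $x^{*(k)}$ is a pure Nash equilibrium with an exam curve ($\bar x<m$) in which the $k$ students with the lowest abilities $\alpha_{(1)},\dots,\alpha_{(k)}$ exert zero effort and the top $n-k$ students (abilities $\alpha_{(k+1)},\dots,\alpha_{(n)}$)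 exert positive effort; $\bar x^{*(k)}$ denotes its mean effort. For $k=0$ this is a curved equilibrium with all efforts positive. *)

(* Defs.v *)
From HB Require Import structures.
From mathcomp Require Import all_boot all_order all_algebra all_fingroup.
From mathcomp Require Import all_classical all_reals all_analysis.
Set Implicit Arguments. Unset Strict Implicit. Unset Printing Implicit Defensive.
Import Order.TTheory GRing.Theory Num.Theory.
Local Open Scope ring_scope.

Section CurvedExam.
Variables (R : realType) (n : nat).

Definition xbar (x : 'I_n -> R) : R := (\sum_(j < n) x j) / n%:R.

(* grade G_i(x) = x_i + max(m - x̄, 0)  (not truncated at 1) *)
Definition grade (m : R) (x : 'I_n -> R) (i : 'I_n) : R :=
  x i + Num.max (m - xbar x) 0.

Definition payoff (alpha : 'I_n -> R) (m : R) (x : 'I_n -> R) (i : 'I_n) : R :=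
  (grade m x i) `^ (alpha i) * (1 - x i) `^ (1 - alpha i).

Definition upd (x : 'I_n -> R) (i : 'I_n) (y : R) : 'I_n -> R :=
  fun j => if j == i then y else x j.

Definition feasible (x : 'I_n -> R) : Prop := forall i, 0 <= x i <= 1.

Definition is_NE (alpha : 'I_n -> R) (m : R) (x : 'I_n -> R) : Prop :=
  feasible x /\
  forall (i : 'I_n) (y : R), 0 <= y <= 1 ->
    payoff alpha m (upd x i y) i <= payoff alpha m x i.

(* sigma lists the students in nondecreasing order of ability:
   student sigma i has ability alpha_(i+1) (order statistic, 0-based i) *)
Definition sorts_abilities (alpha : 'I_n -> R) (sigma : {perm 'I_n}) : Prop :=
  forall i j : 'I_n, (i <= j)%N -> alpha (sigma i) <= alpha (sigma j).

Definition k_dont_care (alpha : 'I_n -> R) (m : R) (sigma : {perm 'I_n})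
    (k : nat) (x : 'I_n -> R) : Prop :=
  [/\ is_NE alpha m x, xbar x < m,
      (forall i : 'I_n, (i < k)%N -> x (sigma i) = 0) &
      (forall i : 'I_n, (k <= i)%N -> 0 < x (sigma i))].

(* S_2 = Σ_{i=k+1}^{n} 1/(n - α_(i))  (1-based), i.e. 0-based indices k..n-1 *)
Definition S2 (alpha : 'I_n -> R) (sigma : {perm 'I_n}) (k : nat) : R :=
  \sum_(i < n | (k <= i)%N) (n%:R - alpha (sigma i))^-1.

End CurvedExam.

(* Main.v *)
Require Import Defs.
From HB Require Import structures.
From mathcomp Require Import all_boot all_order all_algebra all_fingroup.
From mathcomp Require Import all_classical all_reals all_analysis.
From mathcomp Require Import ring lra.
Import Order.TTheory GRing.Theory Num.Theory.
Local Open Scope ring_scope.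

Section H.
Variable R : realType.

Lemma amgm (u v a : R) : 0 <= u -> 0 <= v -> 0 < a < 1 ->
  u `^ a * v `^ (1 - a) <= a * u + (1 - a) * v.
Proof.
move=> u0 v0 /andP[a0 a1].
have b0 : 0 < 1 - a by rewrite subr_gt0.
have := @conjugate_powR R (u `^ a) (v `^ (1 - a)) a^-1 (1 - a)^-1
  (powR_ge0 _ _) (powR_ge0 _ _) ltac:(by rewrite invr_gt0) ltac:(by rewrite invr_gt0).
rewrite !invrK addrC subrK => /(_ erefl).
rewrite -!powRrM !mulfV ?gt_eqF // !powRr1 //.
by rewrite (mulrC u) (mulrC v).
Qed.

Lemma key (a b c x y : R) : 0 < a < 1 -> 0 < b -> 0 < c -> 0 <= x <= 1 ->
  0 <= y < 1 -> 0 < (y - x) * (a * b * (1 - y) - (1 - a) * (c + b * y)) ->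
  (c + b * x) `^ a * (1 - x) `^ (1 - a) < (c + b * y) `^ a * (1 - y) `^ (1 - a).
Proof.
move=> ha b0 c0 /andP[x0 x1] /andP[y0 y1] hd.
have C0 : 0 < c + b * y by rewrite ltr_wpDr // mulr_ge0 // ltW.
have A0 : 0 < c + b * x by rewrite ltr_wpDr // mulr_ge0 // ltW.
have D0 : 0 < 1 - y by rewrite subr_gt0.
have B0 : 0 <= 1 - x by rewrite subr_ge0.
set C := c + b * y; set D := 1 - y; set A := c + b * x; set B := 1 - x.
have -> : A = C * (A / C) by rewrite mulrC divfK // gt_eqF.
have -> : B = D * (B / D) by rewrite mulrC divfK // gt_eqF.
have AC : 0 <= A / C by rewrite divr_ge0 // ltW.
have BD : 0 <= B / D by rewrite divr_ge0 // ltW.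
rewrite (powRM _ (ltW C0) AC) (powRM _ (ltW D0) BD).
rewrite mulrACA.
have P : 0 < C `^ a * D `^ (1 - a) by rewrite mulr_gt0 // powR_gt0.
rewrite -[X in _ < X]mulr1 ltr_pM2l //.
apply: le_lt_trans; first exact: amgm.
have -> : a * (A / C) + (1 - a) * (B / D) = 1 - (y - x) * (a * b * (1 - y) - (1 - a) * (c + b * y)) / (C * D).
  rewrite /A /B /C /D; field; apply/andP; split; rewrite gt_eqF //.
rewrite ltrBlDr ltrDl divr_gt0 // mulr_gt0 //.
Qed.

Variable n : nat.
Hypothesis hn : (0 < n)%N.
Local Notation N := (n%:R : R).

Lemma N0 : N != 0. Proof. by rewrite pnatr_eq0 -lt0n. Qed.

Lemma sum_upd (x : 'I_n -> R) i y :
  \sum_(j < n) upd x i y j = \sum_(j < n) x j + (y - x i).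
Proof.
rewrite (bigD1 i) //= [X in _ = X + _](bigD1 i) //= /upd eqxx.
rewrite (eq_bigr x); last by move=> j /negbTE ->.
ring.
Qed.

Lemma xbar_upd (x : 'I_n -> R) i y :
  xbar (upd x i y) = xbar x + (y - x i) / N.
Proof. by rewrite /xbar sum_upd mulrDl. Qed.

Lemma upd_self (x : 'I_n -> R) i y : upd x i y i = y.
Proof. by rewrite /upd eqxx. Qed.

Lemma grade_upd_ge (m : R) (x : 'I_n -> R) i y :
  (m - xbar x + x i / N) + (1 - N^-1) * y <= grade m (upd x i y) i.
Proof.
rewrite /grade upd_self xbar_upd.
have hmx : forall u : R, u <= Num.max u 0 by move=> u; rewrite le_max lexx.
apply: le_trans (lerD (lexx y) (hmx _)).
have := N0; move=> hN.
rewrite le_eqVlt; apply/orP; left; apply/eqP; field => //.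
Qed.

Lemma grade_eq (m : R) (x : 'I_n -> R) i : xbar x < m ->
  grade m x i = (m - xbar x + x i / N) + (1 - N^-1) * x i.
Proof.
move=> h; rewrite /grade max_l; last by rewrite subr_ge0 ltW.
have := N0; move=> hN; field => //.
Qed.

Lemma grade_upd0 (m : R) (x : 'I_n -> R) i : 0 < m - xbar x + x i / N ->
  grade m (upd x i 0) i = m - xbar x + x i / N.
Proof.
move=> h; rewrite /grade upd_self xbar_upd add0r max_l.
  by rewrite sub0r mulNr opprD opprK addrA.
by rewrite sub0r mulNr opprD opprK addrA ltW.
Qed.

Lemma payoff_ge (alpha : 'I_n -> R) (m : R) (x : 'I_n -> R) i y :
  0 < alpha i -> 0 <= m - xbar x + x i / N ->  0 <= y ->
  (m - xbar x + x i / N + (1 - N^-1) * y) `^ alpha i * (1 - y) `^ (1 - alpha i)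
  <= payoff alpha m (upd x i y) i.
Proof.
move=> a0 c0 y0; rewrite /payoff upd_self.
apply: ler_wpM2r; first exact: powR_ge0.
apply: ge0_ler_powR; [exact: ltW | | | exact: grade_upd_ge].
  rewrite nnegrE addr_ge0 // mulr_ge0 // subr_ge0 invf_le1 ?ler1n ?ltr0n //.
rewrite nnegrE; apply: le_trans (grade_upd_ge _ _ _ _).
rewrite addr_ge0 // mulr_ge0 // subr_ge0 invf_le1 ?ler1n ?ltr0n //.
Qed.

Lemma payoff_eq (alpha : 'I_n -> R) (m : R) (x : 'I_n -> R) i : xbar x < m ->
  payoff alpha m x i =
  (m - xbar x + x i / N + (1 - N^-1) * x i) `^ alpha i * (1 - x i) `^ (1 - alpha i).
Proof. by move=> h; rewrite /payoff grade_eq. Qed.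

Lemma payoff_upd0 (alpha : 'I_n -> R) (m : R) (x : 'I_n -> R) i :
  0 < m - xbar x + x i / N ->
  payoff alpha m (upd x i 0) i =
  (m - xbar x + x i / N + (1 - N^-1) * 0) `^ alpha i * (1 - 0) `^ (1 - alpha i).
Proof. by move=> h; rewrite /payoff grade_upd0 // upd_self mulr0 addr0. Qed.


Variables (alpha : 'I_n -> R) (m : R).
Hypothesis halpha : forall i, 0 < alpha i < 1.
Hypothesis hn2 : (2 <= n)%N.
Local Notation b := (1 - N^-1).

Lemma N1 : 1 < N. Proof. by rewrite ltr1n. Qed.
Lemma b0 : 0 < b.
Proof. by rewrite subr_gt0 invf_lt1 ?N1 // (lt_trans ltr01 N1). Qed.

Lemma zero_curve x i : is_NE alpha m x -> x i = 0 -> xbar x < m.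
Proof.
move=> [hf hne] xi0; rewrite ltNge; apply/negP => hle.
have a0 : 0 < alpha i by case/andP: (halpha i).
have h0 : payoff alpha m x i = 0.
  rewrite /payoff /grade xi0 add0r max_r ?subr_le0 // powR0 ?mul0r //.
  by rewrite gt_eqF.
have := hne i (2^-1) ltac:(by rewrite invr_ge0 ler0n /= invf_le1 ?ler1n ?ltr0n).
rewrite h0 /payoff upd_self => hle2.
have : 0 < grade m (upd x i 2^-1) i `^ alpha i * (1 - 2^-1) `^ (1 - alpha i).
  apply: mulr_gt0; apply: powR_gt0.
    rewrite /grade upd_self; apply: (lt_le_trans (_ : 0 < 2^-1)).
      by rewrite invr_gt0 ltr0n.
    by rewrite lerDl le_max lexx orbT.
  by rewrite subr_gt0 invf_lt1 ?ltr1n ?ltr0n.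
by rewrite ltNge hle2.
Qed.

Lemma zero_cond x i : is_NE alpha m x -> x i = 0 ->
  alpha i * b <= (1 - alpha i) * (m - xbar x).
Proof.
move=> hne xi0; have hc := zero_curve x i hne xi0.
case: hne => hf hne.
rewrite leNgt; apply/negP => hlt.
have /andP[a0 a1] := halpha i.
have hb := b0.
set g := m - xbar x.
have g0 : 0 < g by rewrite subr_gt0.
set ys := alpha i - (1 - alpha i) * g / b.
have ys0 : 0 < ys.
  by rewrite subr_gt0 ltr_pdivrMr.
have ys1 : ys < 1.
  apply: (@lt_trans _ _ (alpha i)); last exact: a1.
  by rewrite ltrBlDr ltrDl divr_gt0 // mulr_gt0 // subr_gt0.
set y := ys / 2.
have y0 : 0 < y by rewrite divr_gt0.
have y1 : y < 1.
  apply: (le_lt_trans _ ys1); rewrite ler_pdivrMr ?ltr0n // ler_peMr ?ltW // ltr1n //.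
have hN := N0.
have hbne : b != 0 by rewrite gt_eqF.
have hN1 : N - 1 != 0 by rewrite gt_eqF // subr_gt0 N1.
have E : alpha i * b * (1 - y) - (1 - alpha i) * (g + b * y) = b * y.
  rewrite /y /ys; field; by rewrite hN hN1.
have := @key (alpha i) b g 0 y ltac:(by rewrite a0 a1) hb g0
  ltac:(by rewrite lexx ler01) ltac:(by rewrite (ltW y0) y1).
rewrite subr0 E => /(_ (mulr_gt0 y0 (mulr_gt0 hb y0))).
have hxi : g = m - xbar x + x i / N by rewrite xi0 mul0r addr0.
rewrite mulr0 addr0 subr0.
move=> lt1.
have c0 : 0 <= m - xbar x + x i / N by rewrite -hxi ltW.
have := payoff_ge alpha m x i y a0 c0 (ltW y0).
rewrite -hxi => le1.
have := hne i y ltac:(by rewrite (ltW y0) (ltW y1)).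
rewrite (payoff_eq alpha m x i hc) xi0 mulr0 mul0r !addr0 subr0 -/g => le2.
have := lt_le_trans lt1 (le_trans le1 le2).
by rewrite ltxx.
Qed.


Lemma part1a x : is_NE alpha m x ->
  forall i j : 'I_n, x i = 0 -> alpha j < alpha i -> x j = 0.
Proof.
move=> hne i j xi0 aji.
have hc := zero_curve x i hne xi0.
have hci := zero_cond x i hne xi0.
case: hne => hf hne.
have /andP[xj0 xj1] := hf j.
rewrite le_eqVlt in xj0; case/orP: xj0 => [/eqP <- //| xjp]; exfalso.
have /andP[ai0 ai1] := halpha i.
have /andP[aj0 aj1] := halpha j.
have hb := b0.
have hN := N0.
set g := m - xbar x.
have g0 : 0 < g by rewrite subr_gt0.
set c := g + x j / N.
have c0 : 0 < c by rewrite /c ltr_wpDr // divr_ge0 // ?ltW // ler0n.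
have hj : alpha j * b < (1 - alpha j) * c.
  have h1 : (1 - alpha j) * (alpha i * b) <= (1 - alpha j) * ((1 - alpha i) * g).
    by rewrite ler_wpM2l // subr_ge0 ltW.
  have h2 : 0 < b * (alpha i - alpha j) by rewrite mulr_gt0 // subr_gt0.
  have h3 : alpha j * b < (1 - alpha j) * g.
    rewrite -(ltr_pM2l (_ : 0 < 1 - alpha i)) ?subr_gt0 //.
    nra.
  apply: (lt_le_trans h3); rewrite ler_pM2l ?subr_gt0 // lerDl divr_ge0 // ?ltW // ler0n.
have := @key (alpha j) b c (x j) 0 ltac:(by rewrite aj0 aj1) hb c0
  ltac:(by rewrite ltW) ltac:(by rewrite lexx ltr01).
have hp : 0 < (0 - x j) * (alpha j * b * (1 - 0) - (1 - alpha j) * (c + b * 0)).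
  rewrite sub0r subr0 mulr1 mulr0 addr0; nra.
move=> /(_ hp) lt1.
have e1 := payoff_upd0 alpha m x j c0.
have e2 := payoff_eq alpha m x j hc.
have := hne j 0 ltac:(by rewrite lexx ler01).
rewrite e1 e2 -/g -/c => le1.
by have := lt_le_trans lt1 le1; rewrite ltxx.
Qed.

Lemma part1b x : is_NE alpha m x ->
  forall i j : 'I_n, 0 < x i -> alpha i < alpha j -> 0 < x j.
Proof.
move=> hne i j xi aij.
have /andP[xj0 _] := (hne.1 j).
rewrite le_eqVlt in xj0; case/orP: xj0 => [/eqP xj0| //].
by have := part1a x hne j i (esym xj0) aij => h; rewrite h ltxx in xi.
Qed.

Lemma interior x i : is_NE alpha m x -> xbar x < m -> 0 < x i ->
  x i * (N - alpha i) = (N - 1) * alpha i - N * (1 - alpha i) * (m - xbar x).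
Proof.
move=> [hf hne] hc xip.
have /andP[_ xi1] := hf i.
have /andP[a0 a1] := halpha i.
have hb := b0.
have hN := N0.
have hbne : b != 0 by rewrite gt_eqF.
have hN1 : N - 1 != 0 by rewrite gt_eqF // subr_gt0 N1.
set g := m - xbar x.
have g0 : 0 < g by rewrite subr_gt0.
set c := g + x i / N.
have c0 : 0 < c by rewrite /c ltr_wpDr // divr_ge0 // ?ltW // ler0n.
set ys := alpha i - (1 - alpha i) * c / b.
have ys1 : ys < 1.
  apply: (@lt_trans _ _ (alpha i)); last exact: a1.
  by rewrite ltrBlDr ltrDl divr_gt0 // mulr_gt0 // subr_gt0.
have hy : forall y, alpha i * b * (1 - y) - (1 - alpha i) * (c + b * y) = b * (ys - y).
  by move=> y; rewrite /ys; field; rewrite hN hN1.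
have eq : x i = ys.
  apply/eqP; apply/negPn/negP => hneq.
  have [y [y0 y1 hp]] : exists y, [/\ 0 <= y, y < 1 &
      0 < (y - x i) * (alpha i * b * (1 - y) - (1 - alpha i) * (c + b * y))].
    case: (lerP 0 ys) => hys.
      exists ((x i + ys) / 2); split.
      - by rewrite divr_ge0 // addr_ge0 // ltW.
      - rewrite ltr_pdivrMr ?ltr0n // mul1r (_ : (2:R) = 1 + 1) //; exact: ler_ltD xi1 ys1.
      - rewrite hy.
        have : 0 < (ys - x i) ^+ 2 by rewrite exprn_even_gt0 //= subr_eq0 eq_sym.
        move=> hsq.
        have -> : ((x i + ys) / 2 - x i) * (b * (ys - (x i + ys) / 2)) = b / 4 * (ys - x i) ^+ 2.
          by field.
        by rewrite mulr_gt0 // divr_gt0.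
    exists (x i / 2); split.
    - by rewrite divr_ge0 // ltW.
    - rewrite ltr_pdivrMr ?ltr0n // mul1r; apply: (le_lt_trans xi1); by rewrite ltr1n.
    - have h1 : x i / 2 - x i < 0 by rewrite subr_lt0 ltr_pdivrMr ?ltr0n // ltr_pMr // ltr1n.
      have h2 : ys - x i / 2 < 0 by rewrite subr_lt0 (lt_le_trans hys) // divr_ge0 // ltW.
      by rewrite hy nmulr_rgt0 // pmulr_rlt0.
  have := @key (alpha i) b c (x i) y ltac:(by rewrite a0 a1) hb c0
    ltac:(by rewrite ltW) ltac:(by rewrite y0 y1) hp.
  have := payoff_ge alpha m x i y a0 (ltW c0) y0.
  have e2 := payoff_eq alpha m x i hc.
  have := hne i y ltac:(by rewrite y0 ltW).
  rewrite e2 -/g -/c => le1 le2 lt1.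
  have := lt_le_trans lt1 (le_trans le2 le1).
  by rewrite ltxx.
have : x i * b = alpha i * b - (1 - alpha i) * c.
  by rewrite {1}eq /ys; field; rewrite hN hN1.
rewrite /c => h.
have -> : x i * (N - alpha i) = N * (x i * b) + (1 - alpha i) * x i.
  by field.
by rewrite h /g; field.
Qed.

Lemma count_top k (c : R) : \sum_(i < n | (k <= i)%N) c = (n - k)%:R * c.
Proof.
transitivity (\sum_(i < n | xpredT i && (k <= i)%N) c); first by apply: eq_bigl.
rewrite -(big_geq_mkord k n xpredT (fun _ => c)) /=.
by rewrite sumr_const_nat mulr_natl.
Qed.

Lemma part2 (sigma : {perm 'I_n}) k x : (k <= n)%N ->
  k_dont_care alpha m sigma k x ->
  (forall i : 'I_n, (k <= i)%N ->
        x (sigma i) =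
          ((N - 1) * alpha (sigma i)
           - N * (1 - alpha (sigma i)) * (m - xbar x))
          / (N - alpha (sigma i))) /\
     xbar x =
       ((N - 1) * (m + 1) * S2 alpha sigma k
        - (n - k)%:R * (m + 1 - N^-1))
       / ((N - 1) * (S2 alpha sigma k - 1) + k%:R).
Proof.
move=> hk [hne hc hbot htop].
have hN := N0.
have hN1 : N - 1 != 0 by rewrite gt_eqF // subr_gt0 N1.
have hNa : forall j, 0 < N - alpha j.
  move=> j; have /andP[_ a1] := halpha j.
  by rewrite subr_gt0 (lt_trans a1) // N1.
have form : forall i : 'I_n, (k <= i)%N ->
   x (sigma i) = ((N - 1) * alpha (sigma i) - N * (1 - alpha (sigma i)) * (m - xbar x))
          / (N - alpha (sigma i)).
  move=> i hi; rewrite -(interior x (sigma i) hne hc (htop i hi)) mulfK // gt_eqF //.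
split => //.
set X := xbar x.
set g := m - X.
set S := S2 alpha sigma k.
have hsum : \sum_(j < n) x j = X * N by rewrite /X /xbar mulfVK.
have hsum2 : \sum_(j < n) x j = \sum_(i < n | (k <= i)%N)
     (N * (N - 1) * (1 + g) * (N - alpha (sigma i))^-1 - (N - 1 + N * g)).
  rewrite (reindex_inj (@perm_inj _ sigma)) /=.
  rewrite (bigID (fun i : 'I_n => (k <= i)%N)) /=.
  rewrite [X in _ + X]big1 ?addr0; last first.
    by move=> i; rewrite -ltnNge => /hbot.
  apply: eq_bigr => i hi; rewrite (form i hi) -/X -/g.
  have := hNa (sigma i); move=> h0; field; by rewrite gt_eqF.
rewrite sumrB -mulr_sumr count_top -/S in hsum2.
have hnk : (n - k)%:R = N - k%:R :> R by rewrite natrB.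
have hD : 0 < (N - 1) * (S - 1) + k%:R.
  pose t := fun i : 'I_n => (N - 1) * (N - alpha (sigma i))^-1 - 1.
  have ht1 : forall i, - N^-1 < t i.
    move=> i; have /andP[a0 _] := halpha (sigma i); have h0 := hNa (sigma i).
    have e : t i + N^-1 = (N - 1) * alpha (sigma i) / (N * (N - alpha (sigma i))).
      by rewrite /t; field; rewrite hN gt_eqF.
    rewrite -subr_gt0 opprK e divr_gt0 // ?mulr_gt0 // ?subr_gt0 ?N1 // ltr0n.
    by apply: (ltn_trans _ hn2).
  have ht2 : forall i, t i <= 0.
    move=> i; have /andP[_ a1] := halpha (sigma i); have h0 := hNa (sigma i).
    have e : t i = (alpha (sigma i) - 1) / (N - alpha (sigma i)).
      by rewrite /t; field; rewrite gt_eqF.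
    by rewrite e pmulr_lle0 ?invr_gt0 // subr_le0 ltW.
  have Dt : (N - 1) * (S - 1) + k%:R = \sum_(i < n | (k <= i)%N) t i + 1.
    rewrite /t sumrB -mulr_sumr count_top mulr1 hnk /S /S2; ring.
  have hall : \sum_(i < n) t i = \sum_(i < n | (k <= i)%N) t i + \sum_(i < n | ~~ (k <= i)%N) t i.
    by rewrite (bigID (fun i : 'I_n => (k <= i)%N)).
  have hbotle : \sum_(i < n | ~~ (k <= i)%N) t i <= 0.
    by apply: sumr_le0 => i _; apply: ht2.
  have hgt : -1 < \sum_(i < n) t i.
    have -> : -1 = \sum_(i < n) (- N^-1).
      by rewrite sumr_const card_ord mulNrn -[_^-1 *+ n]mulr_natr mulVf.
    apply: ltr_sum => //; apply/hasP; exists (Ordinal hn) => //; rewrite mem_index_enum.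
  rewrite Dt; lra.

apply: (canRL (mulfK (negbT (gt_eqF hD)))).
apply: (mulfI hN).
rewrite hnk in hsum2 *.
apply/eqP; rewrite -subr_eq0; apply/eqP.
have -> : N * (X * ((N - 1) * (S - 1) + k%:R)) -
  N * ((N - 1) * (m + 1) * S - (N - k%:R) * (m + 1 - N^-1)) =
  X * N - (N * (N - 1) * (1 + g) * S - (N - k%:R) * (N - 1 + N * g)).
  by rewrite /g; field.
by rewrite -hsum hsum2 subrr.
Qed.
End H.

Theorem mainTheorem13 (R : realType) (n : nat) (hn : (2 <= n)%N)
    (alpha : 'I_n -> R) (halpha : forall i, 0 < alpha i < 1)
    (m : R) (hm : 0 < m < 1) :
  (* (1) monotonicity of participation in any pure Nash equilibrium *)
  (forall x : 'I_n -> R, is_NE alpha m x ->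
     (forall i j : 'I_n, x i = 0 -> alpha j < alpha i -> x j = 0) /\
     (forall i j : 'I_n, 0 < x i -> alpha i < alpha j -> 0 < x j)) /\
  (* (2) closed form of a k-don't care equilibrium *)
  (forall (sigma : {perm 'I_n}) (k : nat) (x : 'I_n -> R),
     sorts_abilities alpha sigma -> (k <= n)%N ->
     k_dont_care alpha m sigma k x ->
     (forall i : 'I_n, (k <= i)%N ->
        x (sigma i) =
          ((n%:R - 1) * alpha (sigma i)
           - n%:R * (1 - alpha (sigma i)) * (m - xbar x))
          / (n%:R - alpha (sigma i))) /\
     xbar x =
       ((n%:R - 1) * (m + 1) * S2 alpha sigma k
        - (n - k)%:R * (m + 1 - n%:R^-1))
       / ((n%:R - 1) * (S2 alpha sigma k - 1) + k%:R)).
Proof.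
have hn0 : (0 < n)%N by apply: leq_trans hn.
split.
  move=> x hne; split.
    exact: (@part1a _ _ hn0 _ _ halpha hn _ hne).
  exact: (@part1b _ _ hn0 _ _ halpha hn _ hne).
move=> sigma k x _ hk hkd.
exact: (@part2 _ _ hn0 _ _ halpha hn _ _ _ hk hkd).
Qed.
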